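(* Let $(W,R)$ be an $L5$-frame, let $g\colon V\to\mathrm{Pow}(W)$ be an assignment in $(W,R)$, and let $w_T\in W$ be an $R$-maximal element of $W$. Then there exist an $L5$-model $\mathcal{M}$ and an assignment $\gamma\colon V\to M$ such that for all formulas $\varphi$: $$(\mathcal{M},\gamma)\vDash\varphi\iff (w_T,g)\vDash\varphi.$$
   Context: Formulas are built from a countable set $V$ of propositional variables using $\wedge,\vee,\rightarrow,\bot$ and the unary modal operator $\square$; $\top$ abbreviates $\bot\rightarrow\bot$. An $L5$-frame is a pair $(W,R)$ with the following properties: - $W$ is a non-empty set; - $R$ is a partial order on $W$; - there is an $R$-smallest element $w_B$ (the bottom world); - every $R$-chain has an upper bound in $W$. An assignment in $(W,R)$ is a map $g\colon V\to\mathrm{Pow}(W)$ with $wRw'$ and $w\in g(x)$ implying $w'\in g(x)$. Kripke satisfaction is defined as follows: - $(w,g)\nvDash\bot$; - $(w,g)\vDash x$ iff $w\in g(x)$; - $\vee,\wedge$ are evaluated pointwise; - $(w,g)\vDash\varphi\rightarrow\psi$ iff for all $w'$ with $wRw'$, $(w',g)\vDash\varphi$ implies $(w',g)\vDash\psi$; - $(w,g)\vDash\square\varphi$ iff $(w_B,g)\vDash\varphi$. An $L5$-model is a structure $\mathcal{M}=(M,\mathit{TRUE},f_\bot,f_\top,f_\rightarrow,f_\vee,f_\wedge,f_\square)$ such that $(M,f_\bot,f_\top,f_\rightarrow,f_\vee,f_\wedge)$ is a Heyting algebra (lattice order $\le$). Moreover, $\mathit{TRUE}\subseteq M$ is an ultrafilter,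 and $f_\square\colon M\to M$ satisfies, for all $m,m',m''\in M$: (i) $f_\square(m)\le m$; (ii) $f_\square(f_\rightarrow(m,m'))\le f_\rightarrow(f_\square(f_\rightarrow(m',m'')),f_\square(f_\rightarrow(m,m'')))$; (iii) $f_\square(f_\vee(m,m'))\le f_\vee(f_\square(m),f_\square(m'))$; (iv) $f_\square(m)\in\mathit{TRUE}$ iff $m=f_\top$; (v) $f_\square(m)=f_\top$ if $m=f_\top$, and $f_\square(m)=f_\bot$ otherwise. An assignment $\gamma\colon V\to M$ extends to all formulas by: - $\gamma(\bot)=f_\bot$; - $\gamma(\square\varphi)=f_\square(\gamma(\varphi))$; - $\gamma(\varphi*\psi)=f_*(\gamma(\varphi),\gamma(\psi))$ for $*\in\{\vee,\wedge,\rightarrow\}$. Satisfaction is $(\mathcal{M},\gamma)\vDash\varphi$ iff $\gamma(\varphi)\in\mathit{TRUE}$. *)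

(* Defs.v *)
Definition var := nat.

Inductive form : Type :=
| FBot : form
| FVar : var -> form
| FAnd : form -> form -> form
| FOr  : form -> form -> form
| FImp : form -> form -> form
| FBox : form -> form.

Definition FTop : form := FImp FBot FBot.

Definition is_chain {W : Type} (R : W -> W -> Prop) (C : W -> Prop) : Prop :=
  forall x y, C x -> C y -> R x y \/ R y x.

Record L5Frame : Type := {
  fW : Type;
  fR : fW -> fW -> Prop;
  fW_nonempty : inhabited fW;
  fR_refl : forall w, fR w w;
  fR_trans : forall u v w, fR u v -> fR v w -> fR u w;
  fR_antisym : forall u v, fR u v -> fR v u -> u = v;
  fwB : fW;
  fwB_least : forall w, fR fwB w;
  f_chain_ub : forall C : fW -> Prop, is_chain fR C ->
                 exists u, forall x, C x -> fR x u
}.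

Definition assignment (F : L5Frame) (g : var -> fW F -> Prop) : Prop :=
  forall x w w', fR F w w' -> g x w -> g x w'.

Fixpoint ksat (F : L5Frame) (g : var -> fW F -> Prop) (w : fW F) (phi : form)
  : Prop :=
  match phi with
  | FBot => False
  | FVar x => g x w
  | FAnd a b => ksat F g w a /\ ksat F g w b
  | FOr a b => ksat F g w a \/ ksat F g w b
  | FImp a b => forall w', fR F w w' -> ksat F g w' a -> ksat F g w' b
  | FBox a => ksat F g (fwB F) a
  end.

Definition R_maximal (F : L5Frame) (w : fW F) : Prop :=
  forall w', fR F w w' -> w' = w.

(** The Heyting algebra is given equationally as a bounded
    lattice (f_bot, f_top, f_vee, f_wedge) with lattice order
    m <= m' :<-> f_wedge m m' = m, and f_imp the relative
    pseudocomplement: c /\ a <= b  iff  c <= a -> b. *)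
Record L5Model : Type := {
  M : Type;
  TRUE : M -> Prop;
  f_bot : M;
  f_top : M;
  f_imp : M -> M -> M;
  f_vee : M -> M -> M;
  f_wedge : M -> M -> M;
  f_box : M -> M;
  vee_comm : forall a b, f_vee a b = f_vee b a;
  wedge_comm : forall a b, f_wedge a b = f_wedge b a;
  vee_assoc : forall a b c, f_vee a (f_vee b c) = f_vee (f_vee a b) c;
  wedge_assoc : forall a b c, f_wedge a (f_wedge b c) = f_wedge (f_wedge a b) c;
  vee_absorb : forall a b, f_vee a (f_wedge a b) = a;
  wedge_absorb : forall a b, f_wedge a (f_vee a b) = a;
  bot_least : forall a, f_wedge f_bot a = f_bot;
  top_greatest : forall a, f_wedge a f_top = a;
  imp_adj : forall a b c,
      f_wedge (f_wedge c a) b = f_wedge c a <-> f_wedge c (f_imp a b) = c;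
  (* TRUE is an ultrafilter (maximal proper filter) *)
  TRUE_top : TRUE f_top;
  TRUE_up : forall a b, TRUE a -> f_wedge a b = a -> TRUE b;
  TRUE_wedge : forall a b, TRUE a -> TRUE b -> TRUE (f_wedge a b);
  TRUE_proper : ~ TRUE f_bot;
  TRUE_max : forall F : M -> Prop,
      F f_top ->
      (forall a b, F a -> f_wedge a b = a -> F b) ->
      (forall a b, F a -> F b -> F (f_wedge a b)) ->
      ~ F f_bot ->
      (forall a, TRUE a -> F a) ->
      forall a, F a -> TRUE a;
  box_i : forall m, f_wedge (f_box m) m = f_box m;
  box_ii : forall m m' m'',
      let l := f_box (f_imp m m') in
      let r := f_imp (f_box (f_imp m' m'')) (f_box (f_imp m m'')) in
      f_wedge l r = l;
  box_iii : forall m m',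
      let l := f_box (f_vee m m') in
      f_wedge l (f_vee (f_box m) (f_box m')) = l;
  box_iv : forall m, TRUE (f_box m) <-> m = f_top;
  box_v : forall m, (m = f_top -> f_box m = f_top) /\
                    (m <> f_top -> f_box m = f_bot)
}.

Fixpoint mval (Mo : L5Model) (gamma : var -> M Mo) (phi : form) : M Mo :=
  match phi with
  | FBot => f_bot Mo
  | FVar x => gamma x
  | FAnd a b => f_wedge Mo (mval Mo gamma a) (mval Mo gamma b)
  | FOr a b => f_vee Mo (mval Mo gamma a) (mval Mo gamma b)
  | FImp a b => f_imp Mo (mval Mo gamma a) (mval Mo gamma b)
  | FBox a => f_box Mo (mval Mo gamma a)
  end.

Definition msat (Mo : L5Model) (gamma : var -> M Mo) (phi : form) : Prop :=
  TRUE Mo (mval Mo gamma phi).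

(* Main.v *)
Require Import Defs.
From Stdlib Require Import Classical FunctionalExtensionality PropExtensionality ProofIrrelevance.

Definition up (F : L5Frame) (U : fW F -> Prop) : Prop :=
  forall w w', fR F w w' -> U w -> U w'.
Definition Mset (F : L5Frame) := {U : fW F -> Prop | up F U}.

Lemma mext (F : L5Frame) (U V : Mset F) :
  (forall w, proj1_sig U w <-> proj1_sig V w) -> U = V.
Proof.
  destruct U as [U HU], V as [V HV]; simpl; intro H.
  assert (U = V) by (apply functional_extensionality; intro w;
                      apply propositional_extensionality; apply H).
  subst; f_equal; apply proof_irrelevance.
Qed.

Lemma mpt (F : L5Frame) (U V : Mset F) : U = V -> forall w, proj1_sig U w <-> proj1_sig V w.
Proof. intros ->; tauto. Qed.

Section S.
Variable F : L5Frame.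

Program Definition mbot : Mset F := fun _ => False.
Next Obligation. intros w w' _ H; exact H. Qed.
Program Definition mtop : Mset F := fun _ => True.
Next Obligation. intros w w' _ H; exact H. Qed.
Program Definition mand (a b : Mset F) : Mset F := fun w => proj1_sig a w /\ proj1_sig b w.
Next Obligation. destruct a as [a Ha], b as [b Hb]; intros w w' R [H1 H2]; simpl in *; eauto. Qed.
Program Definition mor (a b : Mset F) : Mset F := fun w => proj1_sig a w \/ proj1_sig b w.
Next Obligation. destruct a as [a Ha], b as [b Hb]; intros w w' R [H1|H2]; simpl in *; eauto. Qed.
Program Definition mimp (a b : Mset F) : Mset F :=
  fun w => forall w', fR F w w' -> proj1_sig a w' -> proj1_sig b w'.
Next Obligation. intros w w' R H w'' R' Ha. apply H; auto. eapply fR_trans; eauto. Qed.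
Program Definition mbox (a : Mset F) : Mset F := fun _ => proj1_sig a (fwB F).
Next Obligation. intros w w' _ H; exact H. Qed.

Lemma up_of (a : Mset F) : up F (proj1_sig a).
Proof. exact (proj2_sig a). Qed.

Variable wT : fW F.
Hypothesis HwT : R_maximal F wT.

Program Definition msing : Mset F := fun w => w = wT.
Next Obligation. intros w w' R ->. apply HwT; exact R. Qed.

Definition TheModel : L5Model.
Proof.
  refine (@Build_L5Model (Mset F) (fun a => proj1_sig a wT) mbot mtop mimp mor mand mbox
    _ _ _ _ _ _ _ _ _ _ _ _ _ _ _ _ _ _ _).
  all: try (intros; apply mext; simpl; intros; tauto).
  1:{ intros a b c. split; intro H.
    + apply mext; simpl; intro w; split; [tauto|]. intro Hc; split; [exact Hc|].
      intros w' R Ha. assert (Hc' : proj1_sig c w') by (eapply up_of; eauto).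
      apply (mpt _ _ _ H w'); simpl; tauto.
    + apply mext; simpl; intro w; split; [tauto|]. intros [Hc Ha]; repeat split; auto.
      pose proof (proj2 (mpt _ _ _ H w) Hc) as [_ Hi]; simpl in Hi.
      apply Hi; auto. apply fR_refl. }
  all: simpl.
  - exact I.
  - intros a b Ha H. simpl in *. apply (mpt _ _ _ H wT) in Ha; simpl in Ha; tauto.
  - intros a b Ha Hb; simpl; auto.
  - simpl; auto.
  - intros P Htop Hup Hw Hbot Hsub a Ha.
    destruct (classic (proj1_sig a wT)) as [H|H]; [exact H|exfalso].
    apply Hbot.
    assert (Hs : P msing) by (apply Hsub; reflexivity).
    replace mbot with (mand a msing); [apply Hw; auto|].
    apply mext; simpl; intro w; split; [intros [H1 ->]; auto|tauto].
  - intro m; apply mext; simpl; intro w; split; [tauto|]. intro H; split; auto.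
    eapply up_of; [apply fwB_least|exact H].
  - intros m m' m''; cbv zeta; apply mext; simpl; intro w; split; [tauto|]. intro H; split; [exact H|].
    intros w' _ H2 w'' R H3. apply H2; auto.
  - intro m; split; intro H.
    + apply mext; simpl; intro w; split; [tauto|]. intros _.
      eapply up_of; [apply fwB_least|exact H].
    + subst; simpl; exact I.
  - intro m; split; intro H.
    + subst; apply mext; simpl; tauto.
    + apply mext; simpl; intro w; split; [|tauto]. intro Hb. apply H.
      apply mext; simpl; intro w'; split; [tauto|]. intros _.
      eapply up_of; [apply fwB_least|exact Hb].
Defined.

End S.

Theorem theorem5p3 (F : L5Frame) (g : var -> fW F -> Prop)
  (Hg : assignment F g) (wT : fW F) (HwT : R_maximal F wT) :
  exists (Mo : L5Model) (gamma : var -> M Mo),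
    forall phi : form, msat Mo gamma phi <-> ksat F g wT phi.
Proof.
  exists (TheModel F wT HwT).
  exists (fun x => exist (up F) (g x) (Hg x)).
  assert (K : forall phi w, proj1_sig (mval (TheModel F wT HwT)
             (fun x => exist (up F) (g x) (Hg x)) phi) w <-> ksat F g w phi).
  { induction phi; intro w; simpl; try tauto.
    - rewrite IHphi1, IHphi2; tauto.
    - rewrite IHphi1, IHphi2; tauto.
    - split; intros H w' R; specialize (H w' R); rewrite IHphi1, IHphi2 in *; auto.
    - apply IHphi. }
  intro phi; apply K.
Qed.
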